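(* Let $(\Omega,\Sigma,\Pr)$ be a probability space and let $A_i\in\Sigma$ for $i\in\mathbb{N}$. For $k\in\mathbb{N}$ let $$S_k:=\sum_{1\le i_1<\cdots<i_k}\Pr(A_{i_1}\cap\cdots\cap A_{i_k})\in[0,\infty].$$ Fix $k\in\mathbb{N}$. Then the identity $$\Pr\Big(\bigcup_{1\le i_1<\cdots<i_k}(A_{i_1}\cap\cdots\cap A_{i_k})\Big)=\sum_{j\in\mathbb{Z}_+}(-1)^j\binom{j+k-1}{k-1}S_{j+k}$$ holds (with all $S_l$ finite and the series convergent) if and only if $S_l\in[0,\infty)$ for all $l\in\mathbb{N}$ and $\lim_{l\to\infty}l^{k-1}S_l=0$.
   Context: $\mathbb{N}$ denotes the positive integers and $\mathbb{Z}_+$ the nonnegative integers. The union on the left is over all strictly increasing $k$-tuples of positive integers. *)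

(* Defs.v *)
From HB Require Import structures.
From mathcomp Require Import all_boot all_order all_algebra.
From mathcomp Require Import all_classical all_reals all_analysis.
Set Implicit Arguments. Unset Strict Implicit. Unset Printing Implicit Defensive.
Import Order.TTheory GRing.Theory Num.Theory numFieldNormedType.Exports.
Local Open Scope classical_set_scope.
Local Open Scope ring_scope.

Definition incr_tuples (k : nat) : set (k.-tuple nat) :=
  [set t | sorted ltn t /\ all (fun i => 0 < i)%N t].
Arguments incr_tuples k : clear implicits.

Definition tuple_inter {T : Type} (A : nat -> set T) {k : nat} (t : k.-tuple nat) : set T :=
  \big[setI/setT]_(i <- t) A i.

Definition Sk {d : measure_display} {T : measurableType d} {R : realType}
  (P : probability T R) (A : nat -> set T) (k : nat) : \bar R :=
  \esum_(t in incr_tuples k) P (tuple_inter A t).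

Definition atleast_k {T : Type} (A : nat -> set T) (k : nat) : set T :=
  \bigcup_(t in incr_tuples k) tuple_inter A t.

(* Main.v *)
Require Import Defs.
From HB Require Import structures.
From mathcomp Require Import all_boot all_order all_algebra.
From mathcomp Require Import zify ring lra.
Set Implicit Arguments. Unset Strict Implicit. Unset Printing Implicit Defensive.
Import Order.TTheory GRing.Theory Num.Theory.

Lemma card_sorted_sub m n (U : {set 'I_n}) :
  #|[set t : m.-tuple 'I_n | sorted ltn (map val t) && ([set i in t] \subset U)]|
  = 'C(#|U|, m).
Proof.
have [n0 | n_gt0] := posnP n.
  subst n.
  have U0 : #|U| = 0 by apply/eqP; rewrite -leqn0; apply: leq_trans (max_card U) _; rewrite card_ord.
  rewrite U0.
  case: m => [|m]; last by apply: eq_card0; case/tupleP=> [[]].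
  apply: (@eq_card1 _ [tuple]) => t; rewrite [t]tuple0 !inE /=.
  by apply/subsetP => x; case: x.
pose i0 := Ordinal n_gt0.
rewrite -cards_draws.
pose f_t (t : m.-tuple 'I_n) := [set i in t].
pose f_A (A : {set 'I_n}) := [tuple of mkseq (nth i0 (enum A)) m].
have val_fA (A : {set 'I_n}) : #|A| = m -> val (f_A A) = enum A.
  by move=> Am; rewrite -[enum _](mkseq_nth i0) -cardE Am.
have inc_A (A : {set 'I_n}) : sorted ltn (map val (enum A)).
  rewrite -[enum _](eq_filter (mem_enum _)).
  rewrite -(eq_filter (mem_map val_inj _)) -filter_map.
  by rewrite (sorted_filter ltn_trans) // unlock val_ord_enum iota_ltn_sorted.
rewrite -!sum1dep_card (reindex_onto f_t f_A) /= => [|A]; last first.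
  case/andP=> _ /eqP cardAm.
  by apply/setP=> x; rewrite inE -(mem_enum A) -val_fA.
apply: eq_bigl => t.
case: (boolP (f_t t \subset U)) => sub; rewrite ?andbT ?andbF //=.
apply/idP/idP => [inc_t|/andP [/eqP t_m /eqP <-]]; last by rewrite val_fA.
have ft_m: #|f_t t| = m.
  rewrite cardsE (card_uniqP _) ?size_tuple // -(map_inj_uniq val_inj).
  exact: (sorted_uniq ltn_trans ltnn).
rewrite ft_m eqxx -val_eqE val_fA // -(inj_eq (inj_map val_inj)) /=.
apply/eqP/(irr_sorted_eq ltn_trans ltnn) => // y.
by apply/mapP/mapP=> [] [x t_x ->]; exists x; rewrite // mem_enum inE in t_x *.
Qed.
Local Open Scope ring_scope.
Lemma bin_fact' n m : (m <= n)%N -> ('C(n, m) * (m`! * (n - m)`!))%N = n`!.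
Proof. exact: bin_fact. Qed.

Lemma binM_swap r a b : (b <= a)%N ->
  ('C(r, a) * 'C(a, b) = 'C(r, b) * 'C(r - b, a - b))%N.
Proof.
move=> ba; have [ar|ra] := leqP a r; last first.
  rewrite (bin_small ra) mul0n; have [br|rb] := leqP b r.
    by rewrite (@bin_small (r - b) (a - b)) ?muln0 //; lia.
  by rewrite (bin_small rb).
have Fp : (0 < b`! * (a - b)`! * (r - a)`!)%N by rewrite !muln_gt0 !fact_gt0.
apply/eqP; rewrite -(eqn_pmul2r Fp); apply/eqP.
have e1 : ('C(r, a) * 'C(a, b) * (b`! * (a - b)`! * (r - a)`!) =
   ('C(a, b) * (b`! * (a - b)`!)) * ('C(r, a) * (r - a)`!))%N by ring.
have e2 : ('C(r, b) * 'C(r - b, a - b) * (b`! * (a - b)`! * (r - a)`!) =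
   ('C(r, b) * b`!) * ('C(r - b, a - b) * ((a - b)`! * (r - a)`!)))%N by ring.
have e3 : (r - a = (r - b) - (a - b))%N by lia.
rewrite e1 e2 bin_fact' // e3 bin_fact'; last by lia.
rewrite -e3.
have e4 : ('C(r, a) * (r - a)`! * a`! = 'C(r, a) * (a`! * (r - a)`!))%N by ring.
have e5 : ('C(r, b) * b`! * (r - b)`! = 'C(r, b) * (b`! * (r - b)`!))%N by ring.
rewrite mulnCA e5 !bin_fact' //; lia.

Qed.

Section Comb.
Variable (R : numDomainType).

Lemma alt_sum b J : \sum_(0 <= j < J.+1) (-1) ^+ j * ('C(b.+1, j))%:R =
  (-1) ^+ J * ('C(b, J))%:R :> R.
Proof.
elim: J => [|J IH]; first by rewrite big_nat1 !bin0 expr0 mul1r.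
rewrite big_nat_recr //= IH binS natrD exprS; ring.
Qed.

Variable (K : nat).
Definition cc j := 'C(j + K, K).
Definition fJ J r : R := \sum_(0 <= j < J) (-1) ^+ j * (cc j)%:R * ('C(r, j + K.+1))%:R.
Definition hJ J r : R := (-1) ^+ J * (((K < r)%N)%:R - fJ J r).

Lemma hJS J r : hJ J.+1 r = (cc J)%:R * ('C(r, J + K.+1))%:R - hJ J r.
Proof.
rewrite /hJ /fJ big_nat_recr //= exprS.
have e : (-1) ^+ J * (-1) ^+ J = 1 :> R by rewrite -expr2 sqrr_sign.
set s := \sum_(_ <= _ < _ ) _.
transitivity ((-1) ^+ J * (-1) ^+ J * (cc J)%:R * ('C(r, J + K.+1))%:R
   - (-1) ^+ J * (((K < r)%N)%:R - s)); first ring.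
by rewrite e mul1r.
Qed.

Lemma hJ0 J : (0 < J)%N -> hJ J 0 = 0.
Proof.
move=> J0; rewrite /hJ /fJ big1 ?subr0 ?mulr0 // => j _.
by rewrite bin0n addnS /= mulr0.
Qed.

Lemma fJS_r J r : fJ J r.+1 = fJ J r +
  ('C(r, K))%:R * \sum_(0 <= j < J) (-1) ^+ j * ('C(r - K, j))%:R.
Proof.
rewrite /fJ big_distrr -big_split /=; apply: eq_bigr => j _.
rewrite addnS binS natrD mulrDr; congr (_ + _).
have := @binM_swap r (j + K) K (leq_addl _ _); rewrite addnK => e.
rewrite /cc mulrCA -mulrA -natrM mulnC e natrM; ring.
Qed.

Lemma hJ_step J r : (0 < J)%N -> hJ J r <= hJ J r.+1.
Proof.
case: J => [//|J] _; rewrite -subr_ge0.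
have -> : hJ J.+1 r.+1 - hJ J.+1 r = (-1) ^+ J.+1 * (((K < r.+1)%N)%:R
   - ((K < r)%N)%:R - ('C(r, K))%:R * \sum_(0 <= j < J.+1) (-1) ^+ j * ('C(r - K, j))%:R).
  rewrite /hJ fJS_r; ring.
case: (ltngtP r K) => [rK|Kr|->].
- have -> : (K < r.+1)%N = false by apply/negbTE; rewrite -leqNgt.
  by rewrite bin_small // subrr !mul0r subrr mulr0.
- have [b eb] : exists b, (r - K = b.+1)%N by exists (r - K).-1; rewrite prednK // subn_gt0.
  rewrite eb alt_sum ltnS (ltnW Kr).
  have -> : (-1) ^+ J.+1 * (1 - 1 - ('C(r, K))%:R * ((-1) ^+ J * ('C(b, J))%:R)) =
     ((-1) ^+ J * (-1) ^+ J) * ('C(r, K))%:R * ('C(b, J))%:R :> R.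
    rewrite exprS; ring.
  by rewrite -expr2 sqrr_sign mul1r -natrM ler0n.
  rewrite ltnSn binn subnn big_nat_recl //= big1 ?addr0.
    by rewrite bin0 expr0 mul1r subr0 !mul1r subrr mulr0.
  by move=> j _; rewrite bin0n /= mulr0.
Qed.

Lemma hJ_ge0 J r : 0 <= hJ J r.
Proof.
case: J => [|J]; first by rewrite /hJ /fJ big_nil subr0 expr0 mul1r ler0n.
elim: r => [|r IH]; first by rewrite hJ0.
exact: le_trans IH (hJ_step _ _).
Qed.

Lemma hJ_le J r : hJ J r <= (cc J)%:R * ('C(r, J + K.+1))%:R.
Proof. by rewrite -subr_ge0 -hJS hJ_ge0. Qed.

Lemma fJ_bound J r : `| ((K < r)%N)%:R - fJ J r | <= (cc J)%:R * ('C(r, J + K.+1))%:R.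
Proof.
have -> : ((K < r)%N)%:R - fJ J r = (-1) ^+ J * hJ J r.
  by rewrite /hJ mulrA -expr2 sqrr_sign mul1r.
by rewrite normrM normr_sign mul1r ger0_norm ?hJ_ge0 ?hJ_le.
Qed.
End Comb.

Definition tset n m (t : m.-tuple 'I_n) : {set 'I_n} := [set i in t].
Definition cnt_set n m (U : {set 'I_n}) : {set m.-tuple 'I_n} :=
  [set t : m.-tuple 'I_n | sorted ltn (map val t) && (tset t \subset U)].
Lemma in_tset n m (t : m.-tuple 'I_n) i : (i \in tset t) = (i \in t).
Proof. by rewrite inE. Qed.
Lemma in_cnt n m (U : {set 'I_n}) t :
  (t \in cnt_set m U) = sorted ltn (map val t) && (tset t \subset U).
Proof. by rewrite inE. Qed.
Lemma card_cnt n m (U : {set 'I_n}) : #|cnt_set m U| = 'C(#|U|, m).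
Proof. exact: card_sorted_sub. Qed.

Lemma prod_cst K c : (\prod_(i < K) c = c ^ K)%N.
Proof. by rewrite big_const_ord; elim: K => //= K ->; rewrite expnS. Qed.

Lemma pow_le_bin j K : ((j + K.+1) ^ K <= K.+1 ^ K * K`! * 'C(j + K, K))%N.
Proof.
rewrite -mulnA [(K`! * _)%N]mulnC bin_ffact ffact_prod -!prod_cst -big_split /=.
apply: leq_prod => i _; have := ltn_ord i; nia.
Qed.

Lemma bin_le_pow j K : ('C(j + K, K) <= (j + K.+1) ^ K)%N.
Proof.
apply: leq_trans (_ : 'C(j + K, K) <= 'C(j + K, K) * K`!)%N _.
  by rewrite leq_pmulr ?fact_gt0.
rewrite bin_ffact ffact_prod -prod_cst; apply: leq_prod => i _; lia.
Qed.

From mathcomp Require Import all_classical all_reals all_analysis.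
Import Order.TTheory GRing.Theory Num.Theory numFieldNormedType.Exports.
Local Open Scope classical_set_scope.
Local Open Scope ring_scope.

Lemma bigI_mem {T : Type} (I : eqType) (F : I -> set T) (s : seq I) x :
  (\big[setI/setT]_(i <- s) F i) x <-> (forall i, i \in s -> F i x).
Proof.
elim: s => [|a s IH]; first by rewrite big_nil; split.
rewrite big_cons; split.
  case=> Fa /IH H i; rewrite in_cons => /orP[/eqP -> //|]; exact: H.
move=> H; split; first by apply: H; rewrite mem_head.
by apply/IH => i si; apply: H; rewrite in_cons si orbT.
Qed.

Lemma bigI_memF {T : Type} (I : finType) (F : I -> set T) x :
  (\big[setI/setT]_(i : I) F i) x <-> (forall i, F i x).
Proof.
rewrite bigI_mem; split => H i //; apply: H; exact: mem_index_enum.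
Qed.

Unset Implicit Arguments.
Section Main.
Context d (T : measurableType d) (R : realType) (P : probability T R)
  (A : nat -> set T) (mA : forall i, measurable (A i)).

Definition mu (X : set T) : R := fine (P X).

Lemma muE X : measurable X -> P X = (mu X)%:E.
Proof. by move=> mX; rewrite /mu fineK // fin_num_measure. Qed.

Lemma mu_ge0 X : 0 <= mu X.
Proof. by rewrite /mu fine_ge0. Qed.

Lemma mtuple l (t : l.-tuple nat) : measurable (tuple_inter A t).
Proof. by apply: bigsetI_measurable. Qed.

Definition phi n l (t : l.-tuple 'I_n.+1) : l.-tuple nat :=
  map_tuple (fun i : 'I_n.+1 => (val i).+1) t.
Arguments phi {n l} t.

Definition srt n l : {pred l.-tuple 'I_n.+1} := fun t => sorted ltn (map val t).

Definition Tn n l : set (l.-tuple nat) :=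
  [set t | incr_tuples l t /\ all (fun i => i <= n.+1)%N t].

Lemma srt_phi n l (t : l.-tuple 'I_n.+1) : sorted ltn (phi t) = srt n l t.
Proof. by rewrite /phi /srt /= !sorted_map. Qed.

Lemma phi_inj (n l : nat) (t1 t2 : l.-tuple 'I_n.+1) : phi t1 = phi t2 -> t1 = t2.
Proof.
move=> /(congr1 val) /= /inj_map H; apply: val_inj; apply: H.
by move=> i j /= /succn_inj /val_inj.
Qed.

Lemma Tn_img (n l : nat) : Tn n l = @phi n l @` [set` srt n l].
Proof.
apply/seteqP; split.
  move=> t [[st pos] le].
  pose t' := map_tuple (fun i => (inord i.-1 : 'I_n.+1)) t.
  have e : phi t' = t.
    apply: val_inj => /=; rewrite -map_comp; apply: map_id_in => i it /=.
    have /allP/(_ i it) := pos; have /allP/(_ i it) := le.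
    move=> h1 h2; rewrite inordK ?prednK //; lia.
  exists t' => //; change (srt n l t'); by rewrite -srt_phi e.
move=> _ [t st <-]; split; first split.
- by rewrite srt_phi; exact: st.
- by apply/allP => i /mapP[j _ ->].
- by apply/allP => i /mapP[j _ ->]; rewrite ltnS -ltnS ltn_ord.
Qed.

Lemma Tn_fin n l : finite_set (Tn n l).
Proof. by rewrite Tn_img; apply: finite_image; exact: finite_finset. Qed.

Lemma Tn_sub n l : Tn n l `<=` incr_tuples l.
Proof. by move=> t []. Qed.

Lemma Tn_mono n m l : (n <= m)%N -> Tn n l `<=` Tn m l.
Proof.
move=> nm t [h /allP le]; split => //; apply/allP => i it.
by apply: leq_trans (le i it) _.
Qed.

Definition sn n l : R := \sum_(t : l.-tuple 'I_n.+1 | srt n l t) mu (tuple_inter A (phi t)).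

Lemma fsum_Tn n l : \sum_(t \in Tn n l) P (tuple_inter A t) = (sn n l)%:E.
Proof.
rewrite Tn_img fsbig_image; last by move=> ? ? _ _; apply: phi_inj.
rewrite -(bigfs _ (r := index_enum _)); last 2 first.
- exact: index_enum_uniq.
- by move=> i _; rewrite mem_index_enum.
rewrite /sn -sumEFin; apply: eq_bigr => t _; exact/muE/mtuple.
Qed.

Lemma sn_ge0 n l : 0 <= sn n l.
Proof. by apply: sumr_ge0 => t _; exact: mu_ge0. Qed.

Lemma sn_mono n m l : (n <= m)%N -> sn n l <= sn m l.
Proof.
move=> nm; rewrite -lee_fin -!fsum_Tn; apply: lee_fsum_nneg_subset.
- exact: Tn_fin.
- exact: Tn_fin.
- by move=> t; rewrite !inE; apply: Tn_mono.
- by move=> t _; exact: measure_ge0.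
Qed.

Lemma sn_le_S n l : ((sn n l)%:E <= Sk P A l)%E.
Proof.
rewrite -fsum_Tn; apply: esum_ge; exists (Tn n l) => //.
by split; [exact: Tn_fin | exact: Tn_sub].
Qed.


Lemma S_le_sup l : (Sk P A l <= ereal_sup (range (fun n => (sn n l)%:E)))%E.
Proof.
apply: ge_ereal_sup => _ [X [finX XI] <-].
have [B eB] := finite_fsetP.1 finX.
pose N := (\big[maxn/0%N]_(t <- finmap.enum_fset B) \big[maxn/0%N]_(i <- t) i)%N.
have XT : X `<=` Tn N l.
  move=> t Xt; split; first exact: XI.
  have tB : t \in finmap.enum_fset B by rewrite eB in Xt.
  apply/allP => i it; apply: leqW.
  apply: leq_trans (_ : \big[maxn/0%N]_(i <- t) i <= N)%N.
    exact: (@leq_bigmax_seq _ _ xpredT (fun i => i)).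
  exact: (@leq_bigmax_seq _ _ xpredT (fun t : l.-tuple nat => \big[maxn/0%N]_(i <- t) i)%N).
apply: (@le_trans _ _ ((sn N l)%:E)).
  rewrite -fsum_Tn; apply: lee_fsum_nneg_subset => //.
  - exact: Tn_fin.
  - by move=> t; rewrite !inE; apply: XT.
have h : range (fun n => (sn n l)%:E) ((sn N l)%:E) by exists N.
exact: (ereal_sup_ubound h).
Qed.

Lemma sn_cvg l : Sk P A l \is a fin_num -> (fun n => sn n l) @ \oo --> fine (Sk P A l).
Proof.
move=> fS.
have nd : nondecreasing_seq (fun n => (sn n l)%:E).
  by move=> n m nm; rewrite lee_fin sn_mono.
have := ereal_nondecreasing_cvgn nd.
have -> : ereal_sup (range (fun n => (sn n l)%:E)) = Sk P A l.
  apply/le_anti/andP; split; last exact: S_le_sup.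
  by apply: ge_ereal_sup => _ [n _ <-]; exact: sn_le_S.
by rewrite -(fineK fS) => /fine_cvg.
Qed.


Definition Uof n x : {set 'I_n.+1} := finset (fun i : 'I_n.+1 => `[< A i.+1 x >]).
Definition E n (U : {set 'I_n.+1}) : set T := [set x | Uof n x = U].

Lemma in_Uof n x (i : 'I_n.+1) : (i \in Uof n x) = `[< A i.+1 x >].
Proof. by rewrite /Uof finset.in_set. Qed.

Lemma mE n U : measurable (E n U).
Proof.
have -> : E n U = \big[setI/setT]_(i : 'I_n.+1) (if i \in U then A i.+1 else ~` A i.+1).
  apply/seteqP; split => x.
  - move=> /= Ex; apply/bigI_memF => i; rewrite -Ex in_Uof.
    by case: asboolP.
  - move=> /bigI_memF H; rewrite /E /=; apply/setP => i; rewrite in_Uof.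
    have := H i; case: (i \in U) => h; [exact/asboolP | exact/asboolPn].
apply: bigsetI_measurable => i _; case: ifP => _; [exact: mA | exact/measurableC/mA].
Qed.

Lemma fsT n (F : {set 'I_n.+1} -> \bar R) :
  (\sum_(U \in [set: {set 'I_n.+1}]) F U = \sum_(U : {set 'I_n.+1}) F U)%E.
Proof.
rewrite (bigfs _ (r := index_enum _) (P := predT)); last 2 first.
- exact: index_enum_uniq.
- by move=> i _; rewrite mem_index_enum.
have -> : [set` (predT : {pred {set 'I_n.+1}})] = [set: {set 'I_n.+1}].
  by apply/seteqP; split.
by [].
Qed.

Lemma atoms n X : measurable X -> mu X = \sum_(U : {set 'I_n.+1}) mu (X `&` E n U).
Proof.
move=> mX.
have eX : X = \bigcup_(U in [set: {set 'I_n.+1}]) (X `&` E n U).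
  apply/seteqP; split => x.
  - by move=> Xx; exists (Uof n x).
  - by move=> [U _ []].
have tr : trivIset [set: {set 'I_n.+1}] (fun U => X `&` E n U).
  by move=> U V _ _ [x [[_ Ux] [_ Vx]]]; rewrite -Ux -Vx.
have := measure_fin_bigcup P finite_finset tr (fun U _ => measurableI _ _ mX (mE n U)).
rewrite -eX fsT => e.
apply: EFin_inj; rewrite -muE // e -sumEFin; apply: eq_bigr => U _.
by apply/muE/measurableI => //; exact: mE.
Qed.


Lemma inter_atom n l (t : l.-tuple 'I_n.+1) U :
  tuple_inter A (phi t) `&` E n U = if tset t \subset U then E n U else set0.
Proof.
case: ifP => sub; apply/seteqP; split => x //.
- by case.
- move=> Ex; split => //; apply/bigI_mem => _ /mapP[j jt ->].
  have : j \in U by apply: (fintype.subsetP sub); rewrite in_tset.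
  by rewrite -Ex in_Uof => /asboolP.
- case => Tx Ex; move/negbT: sub => /negP; apply; apply/fintype.subsetP => j.
  rewrite in_tset => jt; rewrite -Ex in_Uof; apply/asboolP.
  by apply: (proj1 (bigI_mem _ _ _) Tx); rewrite /phi /=; apply: map_f.
Qed.

Lemma sn_atoms n l : sn n l = \sum_(U : {set 'I_n.+1}) mu (E n U) * ('C(#|U|, l))%:R.
Proof.
rewrite /sn.
under eq_bigr => t _ do rewrite (atoms n _ (mtuple _ _)).
rewrite exchange_big /=; apply: eq_bigr => U _.
under eq_bigr => t _ do rewrite inter_atom.
transitivity (\sum_(t | srt n l t && (tset t \subset U)) mu (E n U)).
  rewrite [RHS]big_mkcondr /=; apply: eq_bigr => t _.
  by case: ifP => _ //; rewrite /mu measure0.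
rewrite (eq_bigl (fun t => t \in cnt_set l U)); last by move=> t; rewrite in_cnt.
by rewrite sumr_const card_cnt mulr_natr.
Qed.

Definition trunc n k : set T := \bigcup_(t in Tn n k) tuple_inter A t.

Lemma mtrunc n k : measurable (trunc n k).
Proof.
apply: fin_bigcup_measurable; first exact: Tn_fin.
by move=> t _; exact: mtuple.
Qed.

Lemma trunc_atom n k U : trunc n k `&` E n U = if (k <= #|U|)%N then E n U else set0.
Proof.
rewrite /trunc Tn_img.
case: ifP => kU; apply/seteqP; split => x //.
- by case.
- move=> Ex; split => //.
  have : (0 < #|cnt_set k U|)%N by rewrite card_cnt bin_gt0.
  case/card_gt0P => t; rewrite in_cnt => /andP[st sub].
  exists (phi t); first by exists t.
  have : (tuple_inter A (phi t) `&` E n U) x by rewrite inter_atom sub.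
  by case.
- case => -[_ [t st <-] Tx] Ex.
  have : (tuple_inter A (phi t) `&` E n U) x by [].
  rewrite inter_atom; case: ifP => sub // _.
  have : (0 < #|cnt_set k U|)%N.
    by apply/card_gt0P; exists t; rewrite in_cnt sub andbT.
  by rewrite card_cnt bin_gt0 kU.
Qed.

Lemma mu_trunc n k : mu (trunc n k) =
  \sum_(U : {set 'I_n.+1}) mu (E n U) * ((k <= #|U|)%N)%:R.
Proof.
rewrite (atoms n _ (mtrunc n k)); apply: eq_bigr => U _.
rewrite trunc_atom; case: ifP => _; first by rewrite mulr1.
by rewrite mulr0 /mu measure0.
Qed.


Lemma key n K J :
  `| \sum_(0 <= j < J) (-1) ^+ j * ('C(j + K, K))%:R * sn n (j + K.+1)
     - mu (trunc n K.+1) | <= ('C(J + K, K))%:R * sn n (J + K.+1).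
Proof.
rewrite mu_trunc.
have -> : \sum_(0 <= j < J) (-1) ^+ j * ('C(j + K, K))%:R * sn n (j + K.+1) =
    \sum_(U : {set 'I_n.+1}) mu (E n U) * fJ R K J #|U|.
  under eq_bigr => j _ do rewrite sn_atoms big_distrr /=.
  rewrite exchange_big /=; apply: eq_bigr => U _.
  rewrite /fJ big_distrr /=; apply: eq_bigr => j _; rewrite /cc; ring.
rewrite -sumrB; apply: le_trans (ler_norm_sum _ _ _) _.
rewrite sn_atoms big_distrr /=; apply: ler_sum => U _.
rewrite -mulrBr normrM ger0_norm ?mu_ge0 // [X in _ <= X]mulrCA.
apply: ler_wpM2l; first exact: mu_ge0.
by rewrite distrC; exact: fJ_bound.
Qed.

Lemma trunc_cvg k : (fun n => mu (trunc n k)) @ \oo --> mu (atleast_k A k).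
Proof.
have eU : \bigcup_n trunc n k = atleast_k A k.
  apply/seteqP; split => x.
  - by move=> [n _ [t Tt tx]]; exists t => //; exact: Tn_sub Tt.
  - move=> [t It tx]; exists (\big[maxn/0%N]_(i <- t) i) => //; exists t => //.
    split => //; apply/allP => i it; apply: leqW.
    exact: (@leq_bigmax_seq _ _ xpredT (fun i => i)).
have nd : nondecreasing_seq (fun n => trunc n k).
  move=> n m nm; apply/subsetPset => x [t Tt tx]; exists t => //.
  exact: Tn_mono nm _ Tt.
have mU : measurable (\bigcup_n trunc n k).
  by apply: bigcupT_measurable => n; exact: mtrunc.
have h := @nondecreasing_cvg_mu _ _ _ P _ (fun n => mtrunc n k) mU nd.
have mA' : measurable (atleast_k A k) by rewrite -eU.
rewrite eU in h.
have h2 : (fun n => P (trunc n k)) @ \oo --> (mu (atleast_k A k))%:E.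
  by rewrite -(muE _ mA'); exact: h.
exact: (fine_cvg h2).
Qed.

End Main.

Theorem theorem1p1 (d : measure_display) (T : measurableType d) (R : realType)
  (P : probability T R) (A : nat -> set T) (mA : forall i, measurable (A i))
  (k : nat) (hk : (0 < k)%N) :
  ((forall l : nat, (0 < l)%N -> Sk P A l \is a fin_num) /\
   (fun n : nat => \sum_(0 <= j < n)
        ((-1) ^+ j * ('C(j + k - 1, k - 1))%:R * fine (Sk P A (j + k)) : R))
     @ \oo --> fine (P (atleast_k A k)))
  <->
  ((forall l : nat, (0 < l)%N -> Sk P A l \is a fin_num) /\
   (fun l : nat => (((l%:R : R) ^+ (k - 1))%:E * Sk P A l)%E) @ \oo --> 0%E).
Proof.
case: k hk => [//|K] _.
have e1 j : (j + K.+1 - 1 = j + K)%N by lia.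
have e2 : (K.+1 - 1 = K)%N by lia.
set a := fun j => fine (Sk P A (j + K.+1)).
set u := fun j => (-1) ^+ j * ('C(j + K, K))%:R * a j : R.
have -> : (fun n => \sum_(0 <= j < n) ((-1) ^+ j * ('C(j + K.+1 - 1, K.+1 - 1))%:R
     * fine (Sk P A (j + K.+1)) : R)) = (fun n => \sum_(0 <= j < n) u j).
  by apply/funext => n; apply: eq_bigr => j _; rewrite e1 e2.
rewrite e2.
set w := fun l : nat => fine (((l%:R : R) ^+ K)%:E * Sk P A l).
have S0 l : (0 <= Sk P A l)%E.
  by apply: esum_ge0 => t _; exact: measure_ge0.
have a0 j : 0 <= a j by apply: fine_ge0.
have wE : (forall l, (0 < l)%N -> Sk P A l \is a fin_num) ->
    forall j, w (j + K.+1) = ((j + K.+1)%:R) ^+ K * a j.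
  move=> fin j.
  have finS : Sk P A (j + K.+1) \is a fin_num.
    by apply: fin; change (0 < j + K.+1)%N; rewrite addnS.
  by rewrite /w /a -(fineK finS) -EFinM.
split => -[fin H]; split => //.
- have u0 : u @ \oo --> 0 by apply: cvg_series_cvg_0; exact: (cvgP _ H).
  pose c : R := ((K.+1 ^ K * K`!)%N)%:R.
  have w0 : w @ \oo --> 0.
    rewrite -(cvg_shiftn K.+1).
    apply: (@squeeze_cvgr _ _ _ _ (fun _ => 0) (fun j => c * `|u j|)).
    + apply: nearW => j; rewrite /= wE //; apply/andP; split.
        by apply: mulr_ge0 => //; apply: exprn_ge0.
      rewrite /u normrM normrM normr_sign mul1r normr_nat ger0_norm //.
      rewrite mulrA -natrX /c -natrM; apply: ler_wpM2r => //.
      by rewrite ler_nat pow_le_bin.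
    + exact: cvg_cst.
    + rewrite -[0 in X in _ --> X](mulr0 c); apply: cvgMr.
      have h0 : (fun x => `|u x|) @ \oo --> `|0 : R| by apply: cvg_norm; exact: u0.
      by rewrite normr0 in h0.
  apply: (@cvg_EFin _ _ _ _ _ 0); last exact: w0.
  exists 1%N => // l /= l1; apply: fin_numM => //; exact: fin.
- have w0 : w @ \oo --> 0 by exact: (fine_cvg H).
  have r0 : (fun J => ('C(J + K, K))%:R * a J) @ \oo --> 0.
    move: w0; rewrite -(cvg_shiftn K.+1) => w0.
    apply: (@squeeze_cvgr _ _ _ _ (fun _ => 0) (fun j => w (j + K.+1))).
    + apply: nearW => j; rewrite /= wE //; apply/andP; split.
        by apply: mulr_ge0.
      apply: ler_wpM2r => //; rewrite -natrX ler_nat; exact: bin_le_pow.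
    + exact: cvg_cst.
    + exact: w0.
  set p := fine (P (atleast_k A K.+1)).
  set PS := fun n => \sum_(0 <= j < n) u j.
  have bound J : `|PS J - p| <= ('C(J + K, K))%:R * a J.
    have cvPSn : (fun n => \sum_(0 <= j < J) (-1) ^+ j * ('C(j + K, K))%:R
        * sn d T R P A n (j + K.+1)) @ \oo --> PS J.
      rewrite /PS; elim: J => [|J IH].
        under eq_fun do rewrite big_nil.
        by rewrite big_nil; exact: cvg_cst.
      under eq_fun do rewrite big_nat_recr //=.
      rewrite big_nat_recr //=; apply: cvgD => //.
      apply: cvgMr; apply: sn_cvg => //; apply: fin.
      by change (0 < J + K.+1)%N; rewrite addnS.
    have cvp := trunc_cvg d T R P A mA K.+1.
    have h : (fun n => `|\sum_(0 <= j < J) (-1) ^+ j * ('C(j + K, K))%:R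
        * sn d T R P A n (j + K.+1) - mu d T R P (trunc d T A n K.+1)|) @ \oo --> `|PS J - p|.
      by apply: cvg_norm; exact: (cvgB cvPSn cvp).
    apply: (ler_cvg_to h (cvg_cst _)).
    apply: nearW => n /=.
    apply: le_trans (key d T R P A mA n K J) _.
    apply: ler_wpM2l => //.
    have := sn_le_S d T R P A mA n (J + K.+1).
    have finS : Sk P A (J + K.+1) \is a fin_num.
      by apply: fin; change (0 < J + K.+1)%N; rewrite addnS.
    by rewrite -(fineK finS) lee_fin.
  have D : (fun J => PS J - p) @ \oo --> 0.
    apply: (@squeeze_cvgr _ _ _ _ (fun J => - (('C(J + K, K))%:R * a J))
      (fun J => ('C(J + K, K))%:R * a J)).
    + by apply: nearW => J; rewrite -ler_norml; exact: bound.
    + rewrite -oppr0; exact: cvgN r0.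
    + exact: r0.
  have -> : PS = (fun J => (PS J - p) + p) by apply/funext => J; rewrite subrK.
  rewrite -[X in _ --> X]add0r; apply: cvgD => //; exact: cvg_cst.
Qed.
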